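(* Let $G$ be a finitely generated group with a finite generating subset $S$, and let $X_1,\dots,X_k$ be proper, non-empty, separable subsets of $G$. If $Y=\bigcup_{i=1}^kX_i$, then $\mathrm{Farb}_{G,Y,S}(n)\preceq\prod_{i=1}^k\mathrm{Farb}_{G,X_i,S}(n)$.
   Context: For $X\subseteq G$ and $y\in G\setminus X$, $D_G(X,y)$ is the minimal order $|Q|$ of a finite group $Q$ with a surjective homomorphism $\pi:G\to Q$ such that $\pi(y)\notin\pi(X)$ ($\infty$ if none). A non-empty subset $X$ is separable if $D_G(X,y)<\infty$ for all $y\in G\setminus X$. $\mathrm{Farb}_{G,X,S}(n)=\max\{D_G(X,g): g\in G\setminus X,\ \|g\|_S\le n\}$ with $\max\emptyset=0$, where $\|\cdot\|_S$ is word length. $f\preceq g$ means there is $C$ with $f(n)\le C\,g(Cn)$ for all $n$. *)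

(* Defs.v *)
From Stdlib Require Import ClassicalEpsilon.
From mathcomp Require Import all_boot all_fingroup.

Set Implicit Arguments.
Unset Strict Implicit.
Unset Printing Implicit Defensive.

Definition pb (P : Prop) : bool :=
  if excluded_middle_informative P then true else false.

Lemma pbP (P : Prop) : reflect P (pb P).
Proof. by rewrite /pb; case: excluded_middle_informative => h; constructor. Qed.

Lemma ex_pb (P : nat -> Prop) : (exists m, P m) -> exists m, pb (P m).
Proof. by case=> m hm; exists m; apply/pbP. Qed.

(* extended naturals: [None] stands for infinity *)
Definition ole (a b : option nat) : Prop :=
  match a, b with
  | _, None => True
  | None, Some _ => False
  | Some a, Some b => (a <= b)%N
  end.

Definition emul (a b : option nat) : option nat :=
  match a, b with
  | Some a, Some b => Some (a * b)%N
  | _, _ => None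
  end.

Definition is_hom (G : groupType) (Q : finGroupType) (pi : G -> Q) : Prop :=
  forall x y : G, pi (x * y)%g = (pi x * pi y)%g.

Definition separating_quotient (G : groupType) (X : G -> Prop) (y : G) (m : nat)
  : Prop :=
  exists (Q : finGroupType) (pi : G -> Q),
    [/\ is_hom pi, (forall q : Q, exists g, pi g = q), #|Q| = m
      & ~ (exists x, X x /\ pi x = pi y)].

Definition Dsep (G : groupType) (X : G -> Prop) (y : G) : option nat :=
  match excluded_middle_informative (exists m, separating_quotient X y m) with
  | left h => Some (ex_minn (ex_pb h))
  | right _ => None
  end.

Definition wlen_le (G : groupType) (S : seq G) (g : G) (n : nat) : Prop :=
  exists w : seq (bool * G),
    [/\ (size w <= n)%N, all (fun p => p.2 \in S) w
      & g = foldr (fun p acc => ((if p.1 then p.2^-1 else p.2) * acc)%g) 1%g w].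

Definition generates (G : groupType) (S : seq G) : Prop :=
  forall g : G, exists n, wlen_le S g n.

Definition separable (G : groupType) (X : G -> Prop) : Prop :=
  (exists x, X x) /\ forall y, ~ X y -> Dsep X y <> None.

Definition proper_subset (G : groupType) (X : G -> Prop) : Prop :=
  exists g, ~ X g.

(* Farb_{G,X,S}(n) = max { D_G(X,g) : g \notin X, ||g||_S <= n }, max of the
   empty set being 0.  The set is finite (S finite), so the max is the least
   upper bound, computed here as the least m bounding all these values
   (None = infinity if some value is infinite). *)
Definition Farb (G : groupType) (S : seq G) (X : G -> Prop) (n : nat)
  : option nat :=
  match excluded_middle_informative
          (exists m, forall g, ~ X g -> wlen_le S g n -> ole (Dsep X g) (Some m))
  with
  | left h => Some (ex_minn (ex_pb h))
  | right _ => None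
  end.

Definition dom_le (f g : nat -> option nat) : Prop :=
  exists C : nat, forall n, ole (f n) (emul (Some C) (g (C * n)%N)).

(* Main.v *)
Require Import Defs.
From Stdlib Require Import ClassicalEpsilon.
From mathcomp Require Import all_boot all_fingroup.

Set Implicit Arguments.
Unset Strict Implicit.
Unset Printing Implicit Defensive.

Lemma hom1 (G : groupType) (Q : finGroupType) (pi : G -> Q) :
  is_hom pi -> pi 1%g = 1%g.
Proof. move=> h; apply: (@mulgI _ (pi 1%g)); by rewrite -h !mulg1. Qed.

Lemma sep_union (G : groupType) (A B : G -> Prop) y m1 m2 :
  separating_quotient A y m1 -> separating_quotient B y m2 ->
  exists2 m, (m <= m1 * m2)%N & separating_quotient (fun x => A x \/ B x) y m.
Proof.
case=> Q1 [p1 [h1 s1 c1 n1]]; case=> Q2 [p2 [h2 s2 c2 n2]].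
pose P := fun g => ((p1 g, p2 g) : (Q1 * Q2)%type).
pose H := [set q : (Q1 * Q2)%type | pb (exists g, P g = q)].
have gH : group_set H.
  apply/group_setP; split.
    by rewrite inE; apply/pbP; exists 1%g; rewrite /P (hom1 h1) (hom1 h2).
  move=> x z; rewrite !inE => /pbP[a ea] /pbP[b eb]; apply/pbP; exists (a * b)%g.
  rewrite -ea -eb /P h1 h2. done.
pose HG := Group gH.
have mH : forall g, P g \in HG by move=> g; rewrite inE; apply/pbP; exists g.
exists #|HG|.
  by rewrite -c1 -c2 -card_prod; apply: max_card.
exists (subg_of HG), (fun g => subg HG (P g)); split.
- move=> a b; rewrite -subgM ?mH //; congr subg; by rewrite /P h1 h2.
- move=> q; have := subgP q; rewrite inE => /pbP[g eg]; exists g.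
  by rewrite eg sgvalK.
- by rewrite card_sub.
- case=> x [Dx e]; have := congr_subg e; rewrite !subgK ?mH // => -[e1 e2].
  by case: Dx => Dx; [apply: n1 | apply: n2]; exists x.
Qed.

Lemma sep_ext (G : groupType) (A B : G -> Prop) y m :
  (forall x, A x -> B x) -> separating_quotient B y m -> separating_quotient A y m.
Proof.
move=> AB [Q [pi [h s c n]]]; exists Q, pi; split => // -[x [Ax e]].
by apply: n; exists x; split => //; apply: AB.
Qed.

Lemma Dsep_some (G : groupType) (X : G -> Prop) y m :
  separating_quotient X y m -> exists d, Dsep X y = Some d /\ (d <= m)%N.
Proof.
move=> sm; rewrite /Dsep; case: excluded_middle_informative => [h|[]]; last by exists m.
eexists; split; first reflexivity.
case: ex_minnP => d _ hmin; apply: hmin; exact/pbP.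
Qed.

Lemma Dsep_sep (G : groupType) (X : G -> Prop) y d :
  Dsep X y = Some d -> separating_quotient X y d.
Proof.
rewrite /Dsep; case: excluded_middle_informative => // h [<-].
by case: ex_minnP => d' /pbP.
Qed.

Lemma Farb_bound (G : groupType) (S : seq G) (X : G -> Prop) n M :
  Farb S X n = Some M ->
  forall g, ~ X g -> wlen_le S g n -> ole (Dsep X g) (Some M).
Proof.
rewrite /Farb; case: excluded_middle_informative => // h [<-].
by case: ex_minnP => d' /pbP.
Qed.

Lemma Farb_le (G : groupType) (S : seq G) (X : G -> Prop) n M :
  (forall g, ~ X g -> wlen_le S g n -> ole (Dsep X g) (Some M)) ->
  ole (Farb S X n) (Some M).
Proof.
move=> hM; rewrite /Farb; case: excluded_middle_informative => [h|[]]; last by exists M.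
rewrite /=; case: ex_minnP => d _ hmin; apply: hmin; exact/pbP.
Qed.

Lemma sep_trivial (G : groupType) (y : G) :
  separating_quotient (fun _ => False) y 1.
Proof.
pose T := (1%G : {group {perm bool}}).
exists (subg_of T), (fun _ => 1%g); split.
- by move=> a b; rewrite mulg1.
- move=> q; exists 1%g; apply: val_inj => /=.
  by have := subgP q; rewrite inE => /eqP ->.
- by rewrite card_sub cards1.
- by case=> x [[]].
Qed.

Lemma key (G : groupType) (S : seq G) (k : nat) (X : 'I_k -> G -> Prop) n
    (r : seq 'I_k) g :
  (forall i, separable (X i)) -> (forall i, ~ X i g) -> wlen_le S g n ->
  exists m, separating_quotient (fun x => exists2 i, i \in r & X i x) g m /\
    ole (Some m) (\big[emul/Some 1%N]_(i <- r) Farb S (X i) n).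
Proof.
move=> sepX ng wg; elim: r => [|i r [m [sm om]]].
  exists 1%N; split; last by rewrite big_nil.
  by apply: sep_ext (sep_trivial g) => x [].
have [_ hs] := sepX i.
case Ed: (Dsep (X i) g) (hs g (ng i)) => [d|] // _.
have sd := Dsep_sep Ed.
have [m' le' sm'] := sep_union sd sm.
exists m'; split.
  apply: sep_ext sm' => x [j]; rewrite in_cons => /orP[/eqP -> |jr] Xj.
    by left.
  by right; exists j.
rewrite big_cons.
case EF: (Farb S (X i) n) => [M|] //.
have := Farb_bound EF (ng i) wg; rewrite Ed /= => dM.
move: om; case: (\big[emul/Some 1%N]_(j <- r) Farb S (X j) n) => [b|] //= mb.
by apply: leq_trans le' _; apply: leq_mul.
Qed.

Theorem mainTheorem20 (G : groupType) (S : seq G) (k : nat)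
    (X : 'I_k -> G -> Prop) :
  generates S ->
  (0 < k)%N ->
  (forall i, proper_subset (X i) /\ separable (X i)) ->
  dom_le (Farb S (fun g => exists i, X i g))
         (fun n => \big[emul/Some 1%N]_(i < k) Farb S (X i) n).
Proof.
move=> _ _ hX; exists 1%N => n; rewrite mul1n.
case E: (\big[emul/Some 1%N]_(i < k) Farb S (X i) n) => [M|] //=.
rewrite mul1n; apply: Farb_le => g ng wg.
have ngi : forall i, ~ X i g by move=> i Xi; apply: ng; exists i.
have [m [sm om]] := @key G S k X n (index_enum 'I_k) g (fun i => (hX i).2) ngi wg.
rewrite E /= in om.
have sm2 : separating_quotient (fun g => exists i, X i g) g m.
  by apply: sep_ext sm => x [i Xi]; exists i => //; rewrite mem_index_enum.
have [d [-> dm]] := Dsep_some sm2.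
by apply: leq_trans dm om.
by case: (Farb _ _ _).

Qed.
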